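(* In the disclosure game described in the context, for any information structure $(X,\pi^S)$ with $\varnothing\notin X$, an equilibrium exists, and in every equilibrium $(\sigma,(\mu^B_m))$ the distribution of Buyer's posterior mean $q^B_{\sigma(x)}$ (with $x$ distributed according to the signal distribution) equals $\mu^S$.
   Context: Let $0<q_\ell<q_h<\infty$, $Q=[q_\ell,q_h]$, and let $c$ be a real number with $0<c<q_\ell$. Let $F$ be a probability distribution on $[0,1]$ with support $[0,1]$ admitting a twice continuously differentiable density $f:(0,1)\to\mathbb{R}_{>0}$. Define $r(v)=(1-F(v))/f(v)$ and $\psi(v)=v-r(v)$ on $(0,1)$, and assume $\psi'(v)>0$ whenever $\psi(v)>0$. For $q\in Q$, $p(q)$ is the unique maximizer over $p\in\mathbb{R}$ of $(p-c)\big(1-F(p/q)\big)$, and let $R(q)=(p(q)-c)\big(1-F(p(q)/q)\big)$. The quality $q$ is drawn from a prior $\mu\in\Delta(Q)$ with support $Q$. Seller's information structure $(X,\pi^S)$ consists of a measurable signal space $X$ with $\varnothing\notin X$ and $\pi^S:Q\to\Delta(X)$; on observing $x$, Seller forms the Bayesian posterior $\mu^S_x$, and $\mu^S$ is the distribution of $\mathbb{E}_{\mu^S_x}[q]$. A disclosure strategy is a measurable $\sigma:X\to X\cup\{\varnothing\}$ with $\sigma(x)\in\{x,\varnothing\}$ for all $x$. Buyer's beliefs are $(\mu^B_m)_{m\in X\cup\{\varnothing\}}$ with posterior means $q^B_m=\mathbb{E}_{\mu^B_m}[q]$. A pair $(\sigma,(\mu^B_m))$ is an equilibrium if (i) for every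 $x\in X$, $\sigma(x)\in\arg\max_{m\in\{x,\varnothing\}} R(q^B_m)$; and (ii) $\mu^B_m=\mu^S_m$ for $m\in X$, and $\mu^B_\varnothing=\mathbb{E}[\mu^S_x\mid\sigma(x)=\varnothing]$ when this conditional expectation is well defined (otherwise $\mu^B_\varnothing$ is arbitrary). *)

(* Defs.v *)
From HB Require Import structures.
From mathcomp Require Import all_boot all_order all_algebra.
From mathcomp Require Import all_classical all_reals all_analysis.
Set Implicit Arguments. Unset Strict Implicit. Unset Printing Implicit Defensive.
Import Order.TTheory GRing.Theory Num.Theory.
Import numFieldNormedType.Exports.
Local Open Scope classical_set_scope.
Local Open Scope ring_scope.

Section Disclosure.
Context {R : realType}.

Definition rr (F f : R -> R) (v : R) : R := (1 - F v) / f v.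
Definition psi (F f : R -> R) (v : R) : R := v - rr F f v.

Definition profit (F : R -> R) (c q p : R) : R := (p - c) * (1 - F (p / q)).

Definition Rrev (F : R -> R) (c : R) (pf : R -> R) (q : R) : R :=
  profit F c q (pf q).

Definition pmean (P : {measure set R -> \bar R}) : R := fine (\int[P]_q (q%:E))%E.

Context {d : measure_display} {X : measurableType d}.

Definition signal_prob (mu : probability R R) (pi : R.-pker R ~> X)
  (B : set X) : \bar R := (\int[mu]_q pi q B)%E.

(* Bayesian posteriors: post is a version of the conditional distribution of
   q given x, i.e. for all measurable A, B:
   P(q in A, x in B) = int_{x in B} post x A dnu(x)  *)
Definition is_posterior (mu : probability R R) (pi : R.-pker R ~> X)
  (post : R.-pker X ~> R) : Prop :=
  forall (A : set R) (B : set X), measurable A -> measurable B ->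
    (\int[mu]_(q in A) pi q B = \int[mu]_q \int[pi q]_(x in B) post x A)%E.

(* A disclosure strategy sigma : X -> X u {empty} with sigma x in {x, empty}
   is represented by its (measurable) non-disclosure set N = sigma^-1(empty).
   Messages are [option X]: [Some x] = x, [None] = the empty message. *)
Definition sigma_of (N : set X) (x : X) : option X :=
  if `[< N x >] then None else Some x.

Definition qB (muB : option X -> probability R R) (m : option X) : R :=
  pmean (muB m).

Definition is_equilibrium (ql qh : R) (F : R -> R) (c : R) (pf : R -> R)
  (mu : probability R R) (pi : R.-pker R ~> X)
  (post : R.-pker X ~> R)
  (N : set X) (muB : option X -> probability R R) : Prop :=
  [/\ measurable N,
      (forall m, muB m `[ql, qh]%classic = 1%E) /\
      (forall x, N x ->
         Rrev F c pf (qB muB (Some x)) <= Rrev F c pf (qB muB None)),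
      (forall x, ~ N x ->
         Rrev F c pf (qB muB None) <= Rrev F c pf (qB muB (Some x))),
      (forall x, (muB (Some x) : set R -> \bar R) = post x) &
      ((0 < signal_prob mu pi N)%E ->
        forall A : set R, measurable A ->
          muB None A =
          ((\int[mu]_q \int[pi q]_(x in N) post x A) / signal_prob mu pi N)%E)].

End Disclosure.

(* Main.v *)
Require Import Defs.
From HB Require Import structures.
From mathcomp Require Import all_boot all_order all_algebra.
From mathcomp Require Import all_classical all_reals all_analysis.
From mathcomp Require Import measurable_realfun.
From mathcomp Require Import lra.
Import Order.TTheory GRing.Theory Num.Theory.
Import numFieldNormedType.Exports.
Local Open Scope classical_set_scope.
Local Open Scope ring_scope.

Lemma F_le1 (R : realType) (F f : R -> R)
  (hF1 : forall v : R, 1 <= v -> F v = 1)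
  (hFf : forall v : R, 0 <= v <= 1 ->
     (\int[@lebesgue_measure R]_(t in `[0%R, v]%classic) (f t)%:E)%E = (F v)%:E)
  (hfpos : forall v : R, 0 < v < 1 -> 0 < f v)
  (hfC2 : forall v : R, 0 < v < 1 ->
     [/\ derivable f v 1, derivable (derive1 f) v 1 &
         {for v, continuous (derive1n 2 f)}]) :
  forall s, 0 < s < 1 -> F s <= 1.
Proof.
move=> s /andP[s0 s1].
have mf : measurable_fun (`]0%R, 1%R[ : set R) (EFin \o f).
  apply/measurable_EFinP; apply: open_continuous_measurable_fun; first exact: interval_open.
  move=> x; rewrite inE/= in_itv/= => hx; have [d1 _ _] := hfC2 x hx.
  by apply: differentiable_continuous; exact/derivable1_diffP.
have mfs : measurable_fun (`]0%R, s[ : set R) (EFin \o f).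
  apply: measurable_funS mf => //; apply: subset_itvl; rewrite bnd_simp; exact: ltW.
rewrite -lee_fin -hFf ?(ltW s0) ?(ltW s1)// -(hF1 1)// -hFf ?ler01 ?lexx//.
rewrite (@integral_itv_bndoo _ _ _ _ true false)//.
rewrite (@integral_itv_bndoo _ _ _ _ true false)//.
apply: ge0_subset_integral => //.
- move=> x; rewrite /= in_itv/= => hx; rewrite lee_fin; exact/ltW/hfpos.
- apply: subset_itvl; rewrite bnd_simp; exact: ltW.
Qed.

Lemma R_incr (R : realType) (ql qh c : R) (F : R -> R) (pf : R -> R)
  (hql : 0 < ql) (hc0 : 0 < c)
  (hF0 : forall v : R, v <= 0 -> F v = 0)
  (hF1 : forall v : R, 1 <= v -> F v = 1)
  (Fle1 : forall s, 0 < s < 1 -> F s <= 1)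
  (hpf : forall q, ql <= q <= qh ->
     forall p, p != pf q -> profit F c q p < profit F c q (pf q)) :
  forall q q', ql <= q -> q < q' -> q' <= qh -> Rrev F c pf q < Rrev F c pf q'.
Proof.
move=> q q' hq qq' hq'.
have q0 : 0 < q by apply: lt_le_trans hq.
have q'0 : 0 < q' by apply: lt_trans qq'.
have hqQ : ql <= q <= qh by rewrite hq /=; apply: ltW; apply: lt_le_trans hq'.
have hq'Q : ql <= q' <= qh by rewrite hq' andbT; apply: ltW; apply: le_lt_trans qq'.
rewrite /Rrev.
set p := pf q.
have Rpos : 0 < profit F c q p.
  have [pq|pq] := eqVneq p q.
    have h2 : 2 * q != p by rewrite pq; apply/eqP => h; lra.
    apply: le_lt_trans (hpf q hqQ _ h2).
    by rewrite /profit mulfK ?lt0r_neq0// hF1 ?subrr ?mulr0// ler1n.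
  have hq1 : q != pf q by rewrite eq_sym.
  have h := hpf q hqQ _ hq1.
  apply: le_lt_trans h.
  by rewrite /profit divff ?lt0r_neq0// hF1// subrr mulr0.
have key : 0 < p - c /\ 0 < 1 - F (p / q).
  move: Rpos; rewrite /profit => Rpos.
  have [a0|a0] := ltP 0 (p - c).
    by split => //; move: Rpos; rewrite pmulr_rgt0.
  exfalso.
  have b0 : 1 - F (p / q) < 0.
    have an : p - c < 0.
      rewrite lt_neqAle a0 andbT; apply/eqP => h; move: Rpos; rewrite h mul0r ltxx //.
    by move: Rpos; rewrite nmulr_rgt0.
  have [pq0|pq0] := leP (p / q) 0.
    by move: b0; rewrite hF0 // subr0 ltr10.
  have [pq1|pq1] := leP 1 (p / q).
    by move: b0; rewrite hF1 // subrr ltxx.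
  have := Fle1 (p / q); rewrite pq0 pq1 => /(_ isT) => h; lra.
case: key => a0 b0.
pose p' := p * q' / q.
have ep : p' / q' = p / q.
  by rewrite /p' mulrAC mulfK ?lt0r_neq0.
have lt1 : profit F c q p < profit F c q' p'.
  rewrite /profit ep ltr_pM2r // ltrD2r /p' -mulrA ltr_pMr ?ltr_pdivlMr ?mul1r//.
  lra.
apply: lt_le_trans lt1 _.
have [e|ne] := eqVneq p' (pf q'); first by rewrite e.
exact/ltW/hpf.
Qed.

Section mix.
Local Open Scope ereal_scope.
Context d2 d3 (Y : measurableType d2) (Z : measurableType d3) (R : realType).
Variables (m : {measure set Y -> \bar R}) (k : Y -> {measure set Z -> \bar R}).
Hypothesis mk : forall U, measurable U -> measurable_fun [set: Y] (k ^~ U).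
Variable lam : {measure set Z -> \bar R}.
Hypothesis hlam : forall A, measurable A -> lam A = \int[m]_y k y A.

Let mix_indic E (mE : measurable E) :
  \int[lam]_z (\1_E z)%:E = \int[m]_y (\int[k y]_z (\1_E z)%:E).
Proof.
rewrite integral_indic// setIT hlam//.
by apply: eq_integral => y _; rewrite integral_indic// setIT.
Qed.

Import HBNNSimple.

Let mix_nnsfun (f : {nnsfun Z >-> R}) :
  \int[lam]_z (f z)%:E = \int[m]_y (\int[k y]_z (f z)%:E).
Proof.
under [in LHS]eq_integral do rewrite fimfunE -fsumEFin//.
rewrite ge0_integral_fsum//; last 2 first.
  - by move=> r; exact/measurable_EFinP/measurableT_comp.
  - by move=> r z _; rewrite EFinM nnfun_muleindic_ge0.
under [in RHS]eq_integral.
  move=> y _.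
  under eq_integral.
    by move=> z _; rewrite fimfunE -fsumEFin//; over.
  rewrite /= ge0_integral_fsum//; last 2 first.
    - by move=> r; exact/measurable_EFinP/measurableT_comp.
    - by move=> r z _; rewrite EFinM nnfun_muleindic_ge0.
  under eq_fsbigr.
    move=> r _.
    rewrite (integralZl_indic _ (fun r => f @^-1` [set r]))//; last first.
      by move=> r0; rewrite preimage_nnfun0.
    rewrite integral_indic// setIT.
    over.
  over.
rewrite /= ge0_integral_fsum//; last 2 first.
  - move=> r; apply: measurable_funeM.
    exact: mk.
  - move=> n y _.
    have := mulemu_ge0 (fun n => f @^-1` [set n]).
    by apply; exact: preimage_nnfun0.
apply: eq_fsbigr => r _.
rewrite (integralZl_indic _ (fun r => f @^-1` [set r]))//; last first.
  exact: preimage_nnfun0.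
rewrite /= mix_indic//.
have [r0|r0] := leP 0%R r.
  rewrite ge0_integralZl//.
    by under eq_integral do rewrite integral_indic// setIT.
  exact: mk.
rewrite integral0_eq ?mule0.
  by rewrite integral0_eq// => y _; rewrite preimage_nnfun0// measure0 mule0.
by move=> y _; rewrite integral0_eq// => z _; rewrite preimage_nnfun0// indic0.
Qed.

Lemma integral_mix f : (forall z, 0 <= f z) -> measurable_fun [set: Z] f ->
  \int[lam]_z f z = \int[m]_y (\int[k y]_z f z).
Proof.
move=> f0 mf.
pose f_ := nnsfun_approx measurableT mf.
transitivity (\int[lam]_z (lim ((f_ n z)%:E @[n --> \oo]))).
  by apply/eq_integral => z _; apply/esym/cvg_lim => //=; exact: cvg_nnsfun_approx.
rewrite monotone_convergence//; last 3 first.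
  by move=> n; exact/measurable_EFinP.
  by move=> n z _; rewrite lee_fin.
  by move=> z _ a b ab; rewrite lee_fin; exact/lefP/nd_nnsfun_approx.
rewrite (_ : (fun _ => _) =
    (fun n => \int[m]_y (\int[k y]_z (f_ n z)%:E)))//; last first.
  by apply/funext => n; rewrite mix_nnsfun.
transitivity (\int[m]_y lim ((\int[k y]_z (f_ n z)%:E) @[n --> \oo])).
  rewrite -monotone_convergence//; last 3 first.
  - move=> n; apply: measurable_fun_integral_kernel => //.
    + by move=> z; rewrite lee_fin.
    + exact/measurable_EFinP.
  - by move=> n y _; apply: integral_ge0 => // z _; rewrite lee_fin.
  - move=> y _ a b ab; apply: ge0_le_integral => //.
    + by move=> z _; rewrite lee_fin.
    + exact/measurable_EFinP.
    + exact/measurable_EFinP.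
    + by move=> z _; rewrite lee_fin; exact/lefP/nd_nnsfun_approx.
apply: eq_integral => y _; rewrite -monotone_convergence//; last 3 first.
  - by move=> n; exact/measurable_EFinP.
  - by move=> n z _; rewrite lee_fin.
  - by move=> z _ a b ab; rewrite lee_fin; exact/lefP/nd_nnsfun_approx.
by apply: eq_integral => z _; apply/cvg_lim => //; exact: cvg_nnsfun_approx.
Qed.

End mix.

Section mixm.
Local Open Scope ereal_scope.
Context d2 d3 (Y : measurableType d2) (Z : measurableType d3) (R : realType).
Variables (m : {measure set Y -> \bar R}) (k : R.-ker Y ~> Z).

Definition mixf (U : set Z) := \int[m]_y k y U.

Let mixf0 : mixf set0 = 0.
Proof.
by rewrite /mixf (eq_integral (cst 0)) ?integral0// => y _; rewrite measure0.
Qed.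

Let mixf_ge0 U : 0 <= mixf U. Proof. exact: integral_ge0. Qed.

Let mixf_sigma_additive : semi_sigma_additive mixf.
Proof.
move=> U mU tU mUU; rewrite [X in _ --> X](_ : _ =
  \int[m]_y (\sum_(n <oo) k y (U n))); last first.
  apply: eq_integral => V _.
  by apply/esym/cvg_lim => //; exact/measure_semi_sigma_additive.
apply/cvg_closeP; split.
  by apply: is_cvg_nneseries => n _ _; exact: integral_ge0.
rewrite closeE// integral_nneseries// => n.
exact: (measurable_kernel k _ (mU n)).
Qed.

HB.instance Definition _ := isMeasure.Build _ _ R
  mixf mixf0 mixf_ge0 mixf_sigma_additive.

End mixm.
Arguments mixf {d2 d3 Y Z R} m k.

Section mkprob.
Local Open Scope ereal_scope.
Context d (T : measurableType d) (R : realType).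
Variables (P : {measure set T -> \bar R}) (hP : P setT = 1).
Definition mkprob : set T -> \bar R := P.
HB.instance Definition _ := Measure.on mkprob.
HB.instance Definition _ := Measure_isProbability.Build _ _ _ mkprob hP.
Definition mkprobP : probability T R := mkprob.
End mkprob.
Arguments mkprobP {d T R P} hP.

Definition gI {R : realType} (ql qh : R) : R -> \bar R :=
  (fun q : R => q%:E) \_ `[ql, qh]%classic.

Lemma gI_ge0 (R : realType) (ql qh : R) : 0 < ql -> forall q, (0 <= gI ql qh q)%E.
Proof.
move=> hql q; rewrite /gI patchE; case: ifPn => // /set_mem /=.
rewrite in_itv /= => /andP[h _]; rewrite lee_fin; apply: ltW; exact: lt_le_trans h.
Qed.

Lemma gI_meas (R : realType) (ql qh : R) : measurable_fun setT (gI ql qh).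
Proof.
rewrite /gI; apply/(measurable_restrictT _ _).1 => //.
exact: EFin_measurable.
Qed.

Lemma mean_lemma (R : realType) (ql qh : R) (hql : 0 < ql) (P : {measure set R -> \bar R})
  (hT : P setT = 1%E) (hI : P `[ql, qh]%classic = 1%E) :
  [/\ (\int[P]_q q%:E = \int[P]_q gI ql qh q)%E,
      (ql%:E <= \int[P]_q gI ql qh q)%E & (\int[P]_q gI ql qh q <= qh%:E)%E].
Proof.
set I := `[ql, qh]%classic.
have mI : measurable I by exact: measurable_itv.
have hC : P (~` I) = 0%E.
  have := measureU P mI (measurableC mI) (setICr I).
  rewrite setUCr => h.
  have h1 : (1 + P (~` I) = 1 + 0)%E by rewrite adde0 -{1}hI -h; exact: hT.
  by move: (congr1 (fun z => z - 1)%E h1); rewrite /= !(addeC 1%E) !addeK.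
have gE : (\int[P]_q gI ql qh q = \int[P]_(q in I) q%:E)%E.
  by rewrite [RHS]integral_mkcond /gI.
split.
- apply: ae_eq_integral => //.
  + exact: gI_meas.
  + exists (~` I); split; [exact: measurableC | exact: hC | ]; move=> x /= h; apply/not_notP => xI; apply: h => _.
    by move/contrapT: xI => xI; rewrite /gI patchE mem_set.
- rewrite gE.
  have h1 : (\int[P]_(q in I) ql%:E <= \int[P]_(q in I) q%:E)%E.
    apply: ge0_le_integral => //.
    + by move=> x _; rewrite lee_fin ltW.
    + by move=> x; rewrite /I /= in_itv /= => /andP[h _]; rewrite lee_fin.
  by move: h1; rewrite integral_cst// hI mule1.
- rewrite gE.
  have h1 : (\int[P]_(q in I) q%:E <= \int[P]_(q in I) qh%:E)%E.
    apply: ge0_le_integral => //.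
    + by move=> x; rewrite /I /= in_itv /= => /andP[h _]; rewrite lee_fin; apply: ltW; exact: lt_le_trans h.
    + by move=> x; rewrite /I /= in_itv /= => /andP[_ h]; rewrite lee_fin.
  by move: h1; rewrite integral_cst// hI mule1.
Qed.

Lemma pmean_lemma (R : realType) (ql qh : R) (hql : 0 < ql) (P : {measure set R -> \bar R})
  (hT : P setT = 1%E) (hI : P `[ql, qh]%classic = 1%E) :
  (pmean P)%:E = (\int[P]_q gI ql qh q)%E /\ ql <= pmean P <= qh.
Proof.
have [e l u] := @mean_lemma R ql qh hql P hT hI.

have fin : (\int[P]_q gI ql qh q)%E \is a fin_num.
  rewrite fin_numElt (lt_le_trans _ l) ?ltNyr //=.
  exact: (le_lt_trans u (ltry _)).
have E : (pmean P)%:E = (\int[P]_q gI ql qh q)%E by rewrite /pmean e fineK.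
by split => //; rewrite -!lee_fin E l u.
Qed.
Arguments integral_mix {d2 d3 Y Z R} m k mk lam hlam f.
Theorem proposition6 (R : realType) (ql qh c : R)
  (hql : 0 < ql) (hqlqh : ql < qh) (hc0 : 0 < c) (hcql : c < ql)
  (F f : R -> R)
  (* F is a distribution on [0,1] with support [0,1] and density f *)
  (hF0 : forall v : R, v <= 0 -> F v = 0)
  (hF1 : forall v : R, 1 <= v -> F v = 1)
  (hFf : forall v : R, 0 <= v <= 1 ->
     (\int[@lebesgue_measure R]_(t in `[0%R, v]%classic) (f t)%:E)%E = (F v)%:E)
  (hfpos : forall v : R, 0 < v < 1 -> 0 < f v)
  (* f is twice continuously differentiable on (0,1) *)
  (hfC2 : forall v : R, 0 < v < 1 ->
     [/\ derivable f v 1, derivable (derive1 f) v 1 &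
         {for v, continuous (derive1n 2 f)}])
  (* psi'(v) > 0 whenever psi(v) > 0 *)
  (hpsi : forall v : R, 0 < v < 1 -> 0 < psi F f v -> 0 < derive1 (psi F f) v)
  (* p(q) is the unique maximizer of (p - c)(1 - F(p/q)) *)
  (pf : R -> R)
  (hpf : forall q, ql <= q <= qh ->
     forall p, p != pf q -> profit F c q p < profit F c q (pf q))
  (* prior on Q with support Q *)
  (mu : probability R R)
  (hmuQ : mu `[ql, qh]%classic = 1%E)
  (hmusupp : forall q e : R, ql <= q <= qh -> (0 < e)%R ->
     (0 < mu `](q - e)%R, (q + e)%R[%classic)%E)
  (* information structure (X, pi^S) *)
  (d : measure_display) (X : measurableType d)
  (pi : R.-pker R ~> X)
  (* Bayesian posteriors mu^S_x, beliefs over Q *)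
  (post : R.-pker X ~> R)
  (hpostQ : forall x, post x `[ql, qh]%classic = 1%E)
  (hpost : is_posterior mu pi post) :
  (exists (N : set X) (muB : option X -> probability R R),
     is_equilibrium ql qh F c pf mu pi post N muB) /\
  (forall (N : set X) (muB : option X -> probability R R),
     is_equilibrium ql qh F c pf mu pi post N muB ->
     forall A : set R, measurable A ->
       signal_prob mu pi ((fun x => qB muB (sigma_of N x)) @^-1` A) =
       signal_prob mu pi ((fun x => pmean (post x)) @^-1` A)).
Proof.
have Fle1 := @F_le1 R F f hF1 hFf hfpos hfC2.
have Rinc := @R_incr R ql qh c F pf hql hc0 hF0 hF1 Fle1 hpf.
have Rmono : forall q q', ql <= q <= qh -> ql <= q' <= qh ->
    Rrev F c pf q <= Rrev F c pf q' -> q <= q'.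
  move=> q q' /andP[a b] /andP[a' b'] h; rewrite leNgt; apply/negP => lt.
  by move: h; rewrite leNgt (Rinc q' q a' lt b).
have Rle : forall q, ql <= q <= qh -> Rrev F c pf ql <= Rrev F c pf q.
  move=> q /andP[a b]; move: a; rewrite le_eqVlt => /orP[/eqP <-//|lt].
  exact/ltW/Rinc.
have postT : forall x, post x setT = 1%E by move=> x; exact: prob_kernel.
pose pm x := pmean (post x).
have pmE : forall x, (pm x)%:E = (\int[post x]_q gI ql qh q)%E.
  by move=> x; have [] := @pmean_lemma R ql qh hql (post x) (postT x) (hpostQ x).
have pmQ : forall x, ql <= pm x <= qh.
  by move=> x; have [] := @pmean_lemma R ql qh hql (post x) (postT x) (hpostQ x).
have mG : measurable_fun setT (fun x => \int[post x]_q gI ql qh q)%E.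
  apply: measurable_fun_integral_kernel.
  - exact: measurable_kernel.
  - exact: gI_ge0.
  - exact: gI_meas.
have mpm : measurable_fun setT pm.
  apply/measurable_EFinP.
  by rewrite (_ : EFin \o pm = (fun x => \int[post x]_q gI ql qh q)%E) //; apply/funext => x; exact: pmE.
split.
- have dT := diracT R ql.
  exists set0, (fun m => match m with Some x => mkprobP (postT x) | None => mkprobP dT end).
  have pm0 : qB (fun m => match m with Some x => mkprobP (postT x) | None => mkprobP dT end) None = ql.
    rewrite /qB /pmean /= /mkprob integral_dirac.
    - by rewrite diracT mul1e.
    - exact: measurableT.
    - exact: EFin_measurable.
  split => //.
  + split; first case => [x|] //=.
    * exact: hpostQ x.
    * by rewrite diracE mem_set //= in_itv /= lexx ltW.
    * by [].
  + move=> x _; rewrite pm0; exact: Rle (pmQ x).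
  + rewrite /signal_prob (eq_integral (cst 0%E)); last by move=> q _; rewrite measure0.
    by rewrite integral0 ltxx.
- move=> N muB [mN [muBQ hin] hout hSome hNone] A mA.
  pose nu : {measure set X -> \bar R} := mixf mu pi.
  have nuE : forall B, signal_prob mu pi B = nu B by [].
  have qBS : forall x, qB muB (Some x) = pm x.
    move=> x; rewrite /qB /pm /pmean; congr (fine _).
    by apply: eq_measure_integral => B mB _; exact: (congr1 (fun g => g B) (hSome x)).
  have [q0E q0Q] := @pmean_lemma R ql qh hql (muB None) (probability_setT _) (muBQ None).
  set q0 := pmean (muB None) in q0E q0Q.
  have pmN : forall x, N x -> pm x <= q0.
    move=> x Nx; apply: Rmono (pmQ x) q0Q _; rewrite -qBS; exact: hin.
  have nuT : nu setT = 1%E.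
    rewrite /nu /= /mixf (eq_integral (cst 1%E)); last by move=> q _; rewrite prob_kernel.
    by rewrite integral_cst // mul1e; exact: probability_setT.
  have [Z [mZ nuZ hZ]] : exists Z, [/\ measurable Z, nu Z = 0%E &
      forall x, N x -> ~ Z x -> pm x = q0].
    have [nuN0|nuNpos] := eqVneq (nu N) 0%E.
      by exists N; split => // x Nx.
    have nuNgt : (0 < nu N)%E by rewrite lt0e nuNpos measure_ge0.
    have nuNle1 : (nu N <= 1)%E.
      by rewrite -nuT; apply: le_measure; rewrite ?inE //.
    have nuNfin : nu N \is a fin_num.
      by rewrite ge0_fin_numE ?measure_ge0 // (le_lt_trans nuNle1) ?ltry.
    set r := fine (nu N).
    have rE : r%:E = nu N by rewrite fineK.
    have r0 : 0 < r by rewrite -lte_fin rE.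
    pose kN : X -> {measure set R -> \bar R} :=
      fun x => if `[< N x >] then post x else mzero.
    have kNE : forall x U, kN x U = ((fun y => post y U) \_ N) x.
      move=> x U; rewrite /kN patchE; case: asboolP => Nx.
      - by rewrite mem_set.
      - by rewrite memNset.
    have mkN : forall U, measurable U -> measurable_fun setT (fun x => kN x U).
      move=> U mU; rewrite (_ : (fun x => kN x U) = (fun y => post y U) \_ N); last first.
        by apply/funext => x; rewrite kNE.
      apply/(measurable_restrictT _ _).1 => //.
      exact: measurable_funS (measurable_kernel post U mU).
    have rinv0 : 0 <= r^-1 by rewrite invr_ge0 ltW.
    pose m' := mscale (NngNum rinv0) nu.
    have hlam : forall B, measurable B -> muB None B = (\int[m']_x kN x B)%E.
      move=> B mB; rewrite hNone // ge0_integral_mscale //; last exact: mkN.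
      rewrite (@integral_mix _ _ _ _ R mu pi (measurable_kernel pi) nu (fun _ _ => erefl) (fun x => kN x B)); last 2 first.
      - by move=> x; exact: measure_ge0.
      - exact: mkN.
      have E : (\int[mu]_y \int[pi y]_z kN z B = \int[mu]_q \int[pi q]_(x in N) post x B)%E.
        apply: eq_integral => q _; rewrite [RHS]integral_mkcond.
        by apply: eq_integral => x _; rewrite kNE.
      rewrite E nuE -rE /= muleC inver gt_eqF //.
    have mkg : measurable_fun setT (fun x => \int[kN x]_q gI ql qh q)%E.
      apply: measurable_fun_integral_kernel.
      - exact: mkN.
      - exact: gI_ge0.
      - exact: gI_meas.
    have key := @integral_mix _ _ _ _ R m' kN mkN (muB None) hlam (gI ql qh) (@gI_ge0 R ql qh hql) (@gI_meas R ql qh).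
    rewrite -q0E ge0_integral_mscale //= in key; last first.
      by move=> x _; apply: integral_ge0 => q _; exact: gI_ge0.
    have kNg : forall x, (\int[kN x]_q gI ql qh q)%E = ((fun y => (pm y)%:E) \_ N) x.
      move=> x; rewrite /kN patchE; case: asboolP => Nx.
      - by rewrite mem_set // pmE.
      - by rewrite memNset // integral_measure_zero.
    have eK : (\int[nu]_x \int[kN x]_q gI ql qh q = \int[nu]_(x in N) (pm x)%:E)%E.
      by rewrite [RHS]integral_mkcond; apply: eq_integral => x _; exact: kNg.
    rewrite eK in key.
    have keyN : (\int[nu]_(x in N) (pm x)%:E = q0%:E * nu N)%E.
      by rewrite -rE key muleAC -EFinM mulVf ?gt_eqF // mul1e.
    pose h := fun x => ((q0 - pm x)%:E)%E.
    have mpmE : measurable_fun N (fun x => (pm x)%:E).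
      by apply: (measurable_funS measurableT) => //; exact/measurable_EFinP.
    have mh : measurable_fun N h.
      apply/measurable_EFinP; apply: measurable_funB; first exact: measurable_cst.
      exact: (measurable_funS measurableT).
    have hge0 : forall x, N x -> (0 <= h x)%E.
      by move=> x Nx; rewrite lee_fin subr_ge0 pmN.
    have e1 : (\int[nu]_(x in N) `|h x| = \int[nu]_(x in N) h x)%E.
      by apply: eq_integral => x /set_mem Nx; rewrite gee0_abs // hge0.
    have e2 : (\int[nu]_(x in N) (h x + (pm x)%:E) = q0%:E * nu N)%E.
      rewrite (eq_integral (fun _ => q0%:E)) ?integral_cst //.
      by move=> x _; rewrite /h -EFinD subrK.
    rewrite ge0_integralD // in e2; last first.
      by move=> x Nx; rewrite lee_fin; case/andP: (pmQ x) => a _; apply: ltW; exact: lt_le_trans a.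
    rewrite keyN in e2.
    have afin : (q0%:E * nu N)%E \is a fin_num by rewrite -rE -EFinM.
    have hint : (\int[nu]_(x in N) `|h x| = 0)%E.
      rewrite e1; move: (congr1 (fun z => z - q0%:E * nu N)%E e2).
      by rewrite /= addeK // subee.
    have := (ae_eq_integral_abs nu mN mh).1 hint.
    case=> Z [mZ nuZ0 sub]; exists Z; split => // x Nx nZx.
    apply: contrapT => neq; apply: nZx; apply: sub => /= /(_ Nx).
    rewrite /h => -[] /eqP; rewrite subr_eq0 => /eqP e; apply: neq; by rewrite e.
  have mS2 : measurable (pm @^-1` A) by have := mpm measurableT _ mA; rewrite setTI.
  set S1 := (fun x => qB muB (sigma_of N x)) @^-1` A.
  have S1out : forall x, ~ N x -> (S1 x <-> A (pm x)).
    by move=> x Nx; rewrite /S1 /sigma_of /=; case: asboolP => // _; rewrite qBS.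
  have S1in : forall x, N x -> (S1 x <-> A q0).
    by move=> x Nx; rewrite /S1 /sigma_of /=; case: asboolP.
  have mS1 : measurable S1.
    have [Aq|nAq] := pselect (A q0).
    - rewrite (_ : S1 = (pm @^-1` A `\` N) `|` N); first exact: measurableU (measurableD mS2 mN) mN.
      apply/seteqP; split => x.
        move=> S1x; have [Nx|Nx] := pselect (N x); first by right.
        by left; split => //; exact/(S1out x Nx).1.
      by case=> [[pA Nx]|Nx]; [exact/(S1out x Nx).2 | exact/(S1in x Nx).2].
    - rewrite (_ : S1 = (pm @^-1` A `\` N)); first exact: measurableD.
      apply/seteqP; split => x.
        move=> S1x; have [Nx|Nx] := pselect (N x); first by move/(S1in x Nx): S1x.
        by split => //; exact/(S1out x Nx).1.
      by case=> pA Nx; exact/(S1out x Nx).2.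
  have eqZ : S1 `|` Z = pm @^-1` A `|` Z.
    apply/seteqP; split => x [Sx|Zx]; try by right.
    - have [Zx|nZx] := pselect (Z x); first by right.
      left; have [Nx|Nx] := pselect (N x).
      + by rewrite /preimage /= hZ //; exact/(S1in x Nx).1.
      + exact/(S1out x Nx).1.
    - have [Zx|nZx] := pselect (Z x); first by right.
      left; have [Nx|Nx] := pselect (N x).
      + by apply/(S1in x Nx).2; rewrite -(hZ x Nx nZx).
      + exact/(S1out x Nx).2.
  rewrite !nuE -/S1.
  have h1 : (nu S1 <= nu (S1 `|` Z))%E.
    by apply: le_measure; rewrite ?inE //; exact: measurableU.
  have h2 : (nu (pm @^-1` A) <= nu (pm @^-1` A `|` Z))%E.
    by apply: le_measure; rewrite ?inE //; exact: measurableU.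
  have h3 : (nu (S1 `|` Z) <= nu S1 + nu Z)%E by exact: measureU2.
  have h4 : (nu (pm @^-1` A `|` Z) <= nu (pm @^-1` A) + nu Z)%E by exact: measureU2.
  rewrite nuZ adde0 in h3; rewrite nuZ adde0 in h4.
  apply/eqP; rewrite eq_le; apply/andP; split.
  - by apply: (le_trans h1); rewrite eqZ; exact: h4.
  - by apply: (le_trans h2); rewrite -eqZ; exact: h3.
Qed.
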